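(* Let $G=(V,E)$ be a graph and $\mathfrak d_{|S_v}(V)=\bigcup_{v\in V}\mathfrak d_{|S_v}$. Then $\mathfrak d_{|S_v}(V)^*=\delta(G)^*$.
   Context: All graphs are finite, simple and undirected. For $G=(V,E)$ and $v\in V$, $E_v$ is the set of edges incident to $v$. For two distinct adjacent edges $e=(v,u)$, $f=(v,w)$, a square spanned by $e$ and $f$ is a $4$-cycle $v,u,x,w,v$ with $x\notin\{v,u,w\}$; it is chordless if neither $(u,w)$ nor $(v,x)$ is an edge. In a chordless square $v,u,x,w$, $(x,w)$ is opposite to $(v,u)$ and $(x,u)$ is opposite to $(v,w)$ (and vice versa). The relation $\delta(G)$ on $E$: $(e,f)\in\delta(G)$ iff (i) $e,f$ are distinct adjacent edges and it is not the case that $e$ and $f$ span exactly one square and that square is chordless; or (ii) $e,f$ are opposite edges of a chordless square; or (iii) $e=f$. For a relation $R$ on $E$, $R^*$ is its transitive closure, the finest equivalence relation on $E$ containing $R$. Define $\mathfrak d_v=((E_v\times E)\cup(E\times E_v))\cap\delta(G)$ and $\mathfrak d_v^*$ the finest equivalence relation on $E$ containing $\mathfrak d_v$. Let $F_v\subseteq E\setminus E_v$ be the set of edges that are the edges not incident to $v$ of some chordless square spanned by two edges $e,e'\in E_v$ with $(e,e')\notin\mathfrak d_v^*$. The partial star product $S_v$ is the subgraph of $G$ with edge set $E_v\cup F_v$ and vertex set the endpoints of these edges. $\mathfrak d_{|S_v}=\{(e,f)\in\mathfrak d_v^*: e,f\in E(S_v)\}$. *)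

(* Defs.v *)
From mathcomp Require Import all_boot.
Set Implicit Arguments. Unset Strict Implicit. Unset Printing Implicit Defensive.

Definition simple_graph (T : finType) (g : rel T) : Prop :=
  symmetric g /\ irreflexive g.

Definition is_edge (T : finType) (g : rel T) (A : {set T}) : Prop :=
  exists x y, g x y /\ A = [set x; y].

(* R^*: the finest equivalence relation on the edge set E containing R. *)
Inductive eqclos (T : finType) (g : rel T) (R : {set T} -> {set T} -> Prop)
  : {set T} -> {set T} -> Prop :=
| eqclos_base A B : R A B -> eqclos g R A B
| eqclos_refl A : is_edge g A -> eqclos g R A A
| eqclos_sym A B : eqclos g R A B -> eqclos g R B A
| eqclos_trans A B C : eqclos g R A B -> eqclos g R B C -> eqclos g R A C.

(* For e = (v,u), f = (v,w): v,u,x,w is a square spanned by e and f. *)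
Definition square (T : finType) (g : rel T) (v u w x : T) : Prop :=
  x \notin [:: v; u; w] /\ g u x /\ g x w.

Definition chordless (T : finType) (g : rel T) (v u w x : T) : Prop :=
  ~~ g u w /\ ~~ g v x.

Definition delta (T : finType) (g : rel T) (A B : {set T}) : Prop :=
  is_edge g A /\ is_edge g B /\
  ( A = B
  \/
     (exists v u w, g v u /\ g v w /\ u != w /\
        A = [set v; u] /\ B = [set v; w] /\
        ~ (exists x, square g v u w x /\ chordless g v u w x /\
                     forall y, square g v u w y -> y = x))
  \/
     (exists v u w x, g v u /\ g v w /\ u != w /\
        square g v u w x /\ chordless g v u w x /\
        ((A = [set v; u] /\ B = [set x; w]) \/
         (A = [set v; w] /\ B = [set x; u])))).

Definition incident (T : finType) (g : rel T) (v : T) (A : {set T}) : Prop :=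
  is_edge g A /\ v \in A.

Definition dv (T : finType) (g : rel T) (v : T) (A B : {set T}) : Prop :=
  (incident g v A \/ incident g v B) /\ delta g A B.

Definition Fv (T : finType) (g : rel T) (v : T) (A : {set T}) : Prop :=
  exists u w x, g v u /\ g v w /\ u != w /\
    square g v u w x /\ chordless g v u w x /\
    ~ eqclos g (dv g v) [set v; u] [set v; w] /\
    (A = [set u; x] \/ A = [set x; w]).

Definition Sv_edge (T : finType) (g : rel T) (v : T) (A : {set T}) : Prop :=
  incident g v A \/ Fv g v A.

Definition d_restr (T : finType) (g : rel T) (v : T) (A B : {set T}) : Prop :=
  eqclos g (dv g v) A B /\ Sv_edge g v A /\ Sv_edge g v B.

Definition d_restr_all (T : finType) (g : rel T) (A B : {set T}) : Prop :=
  exists v : T, d_restr g v A B.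

(* Main.v *)
Require Import Defs.
From mathcomp Require Import all_boot.
From Stdlib Require Import Classical.

Lemma eqclos_lift (T : finType) (g : rel T) (R R' : {set T} -> {set T} -> Prop) :
  (forall A B, R A B -> eqclos g R' A B) ->
  forall A B, eqclos g R A B -> eqclos g R' A B.
Proof.
move=> H A B; elim=> {A B}.
- by move=> A B /H.
- by move=> A HA; apply: eqclos_refl.
- by move=> A B _ IH; apply: eqclos_sym.
- by move=> A B C _ IH1 _ IH2; apply: eqclos_trans IH1 IH2.
Qed.

Lemma edge2 (T : finType) (g : rel T) a b : g a b -> is_edge g [set a; b].
Proof. by move=> h; exists a, b. Qed.

Lemma main_sq (T : finType) (g : rel T) (hg : simple_graph g) v u w x :
  g v u -> g v w -> u != w -> square g v u w x -> chordless g v u w x ->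
  eqclos g (d_restr_all g) [set v; u] [set x; w].
Proof.
case: hg => sym irr.
move=> gvu gvw uw sq ch.
have Hd : delta g [set v; u] [set x; w].
  case: (sq) => _ [gux gxw].
  split; first exact: edge2.
  split; first exact: edge2.
  right; right. exists v, u, w, x. by refine (conj _ (conj _ (conj _ (conj _ (conj _ _))))) => //; left.
case: (sq) => xn [gux gxw].
have gwv : g w v by rewrite sym.
have gwx : g w x by rewrite sym.
have vx : v != x.
  by apply/negP => /eqP E; move: xn; rewrite E !inE eqxx.
have sqw : square g w v x u.
  split; last by split.
  rewrite !inE; apply/negP => /or3P [/eqP E|/eqP E|/eqP E].
  - by move: uw; rewrite E eqxx.
  - by move: gvu; rewrite E irr.
  - by move: gux; rewrite E irr.
have chw : chordless g w v x u.
  case: ch => c1 c2; split => //.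
  by rewrite sym.
case: (classic (eqclos g (dv g v) [set v; u] [set v; w])) => Hv; last first.
  apply: eqclos_base; exists v; split.
    apply: eqclos_base; split => //; left; split; [exact: edge2|by rewrite set21].
  split; first by left; split; [exact: edge2|by rewrite set21].
  right; exists u, w, x; by refine (conj _ (conj _ (conj _ (conj _ (conj _ (conj _ _)))))) => //; right.
case: (classic (eqclos g (dv g w) [set w; v] [set w; x])) => Hw; last first.
  apply: eqclos_base; exists w; split.
    apply: eqclos_base; split => //; right; split; [exact: edge2|by rewrite set22].
  split; last by left; split; [exact: edge2|by rewrite set22].
  right; exists v, x, u; refine (conj _ (conj _ (conj _ (conj _ (conj _ (conj _ _)))))) => //. by left.
apply: (@eqclos_trans _ _ _ _ [set v; w]).
  apply: eqclos_base; exists v; split => //.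
  split; left; split; (try exact: edge2); by rewrite set21.
apply: eqclos_base; exists w.
have E1 : [set w; v] = [set v; w] by rewrite setUC.
have E2 : [set w; x] = [set x; w] by rewrite setUC.
rewrite -E1 -E2; split => //.
split; left; split; (try exact: edge2); by rewrite set21.
Qed.

Theorem theorem3p9 (T : finType) (g : rel T) (hg : simple_graph g) :
  forall A B : {set T},
    eqclos g (d_restr_all g) A B <-> eqclos g (delta g) A B.
Proof.
move=> A B; split.
  apply: eqclos_lift => A' B' [v [H _]].
  move: A' B' H; apply: eqclos_lift => C D [_ HD]; exact: eqclos_base.
apply: eqclos_lift => {A B} A B [HA [HB [E|[[v [u [w [gvu [gvw [uw [-> [-> Hn]]]]]]]]|
  [v [u [w [x [gvu [gvw [uw [sq [ch [[-> ->]|[-> ->]]]]]]]]]]]]]]].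
- by rewrite E; apply: eqclos_refl.
- apply: eqclos_base; exists v; split.
    apply: eqclos_base; split; first by left; split; [exact: edge2 | rewrite set21].
    split; first exact: edge2; split; first exact: edge2; right; left; exists v, u, w; by refine (conj _ (conj _ (conj _ (conj _ (conj _ _))))) => //.
  by split; left; split; [exact: edge2|rewrite set21|exact: edge2|rewrite set21].
- exact: main_sq.
- case: (hg) => sym irr.
  apply: (@main_sq T g hg v w u x gvw gvu); first by rewrite eq_sym.
    case: sq => [xn [h1 h2]]; split; last by split; rewrite sym.
    by move: xn; rewrite !inE; apply: contra => /or3P [->|->|->]; rewrite ?orbT.
  by case: ch => c1 c2; split => //; rewrite sym.
Qed.
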